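(* Let $s\in S$, let $A_s=((p_1,p_2),q_1,q_2,0)$ and $v=v_s$, and assume that the loop $A_s\xrightarrow{v}A_s$ forms a Hamiltonian cycle of $s$. Let $x,y,z\in\Sigma^*$ and $(d_1,d_2)\in Q_1\times Q_2$ satisfy: 1. $\kappa\le|x|<|v|+\kappa$ and $x$ is a prefix of some word in $v^+$; 2. $0\le|y|<|v|$, and $xy$ is the longest common prefix of $xyz$ and some word in $v^+$ (i.e. $xy$ is a prefix of a word in $v^+$, and no prefix of $xyz$ longer than $xy$ is a prefix of a word in $v^+$); 3. $z\in B(c_1,c_2,d_1,d_2)$, where $c_1=p_1\cdot xy$ and $c_2=p_2\cdot x$; 4. $q_1=d_1\cdot\bar x\bar v^{n_1}$, and in the run of $\mathcal{A}_1$ from $d_1$ on $\bar x\bar v^{n_1}$ the state reached after exactly $\kappa$ letters lies in $F_1$, while no state reached after more than $\kappa$ letters lies in $F_1$; 5. $q_2=d_2\cdot\bar y\bar x\bar v^{n_2}$, and, with $e_2=d_2\cdot\bar y\bar x$, no state reached from $e_2$ in $\mathcal{A}_2$ after reading a nonempty prefix of $\bar v^{n_2}$ lies in $F_2$. If $\mathcal{H}_\kappa(L_1,L_2)$ is regular, then there is a factorization $xyz\bar x\bar v=\mu\delta\beta\bar\delta\bar\mu$ with $|\delta|=\kappa$ and $p_2\cdot\mu\delta\bar\beta\bar\delta\in F_2$.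
   Context: $\Sigma$ is a finite alphabet with at least two letters with an involution $a\mapsto\bar a$ ($\bar{\bar a}=a$), extended to words by $\overline{a_1\cdots a_m}=\bar a_m\cdots\bar a_1$ and to languages elementwise. $\kappa$ is a fixed positive integer. $\mathcal{H}_\kappa(L_1,L_2)=\{\gamma\alpha\beta\bar\alpha\bar\gamma:|\alpha|\ge\kappa,\ \gamma\alpha\beta\bar\alpha\in L_1\text{ or }\alpha\beta\bar\alpha\bar\gamma\in L_2\}$. $L_1,L_2$ are regular; $\mathcal{A}_1=(Q_1,\Sigma,E_1,\{q_{01}\},F_1)$ is a complete DFA accepting $L_1$, $\mathcal{A}_2=(Q_2,\Sigma,E_2,\{q_{02}\},F_2)$ a complete DFA accepting $\overline{L_2}$; $n_i=|Q_i|$; $p\cdot w$ is the state reached from $p$ on $w$. Construction of $\mathcal{A}$: $Q_{12}=\{(q_{01}\cdot w,q_{02}\cdot w):w\in\Sigma^*\}$ with $(p_1,p_2)\cdot w=(p_1\cdot w,p_2\cdot w)$. For $(p_1,p_2,q_1,q_2)\in Q_1\times Q_2\times Q_1\times Q_2$ let $B(p_1,p_2,q_1,q_2)=\{w:p_1\cdot w=q_1,\ p_2\cdot\bar w=q_2\}$; the quadruple is a basic bridge if this set is nonempty. States of $\mathcal{A}$ are all $((p_1,p_2),q_1,q_2,\ell)$ with $(p_1,p_2)\in Q_{12}$, $q_i\in Q_i$, $\ell\in\{0,\dots,\kappa\}$, $(p_1,p_2,q_1,q_2)$ a basic bridge. For $a\in\Sigma$, $P\in Q_{12}$, $q_i\in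 Q_i$, there is an $a$-arc from $(P,q_1\cdot\bar a,q_2\cdot\bar a,\ell)$ to $(P\cdot a,q_1,q_2,\ell')$, provided both are states, exactly when: $\ell=\ell'=0$ and $q_1\cdot\bar a\notin F_1$, $q_2\cdot\bar a\notin F_2$; or $\ell=0,\ell'=1$ and ($q_1\cdot\bar a\in F_1$ or $q_2\cdot\bar a\in F_2$); or $1\le\ell<\kappa$ and $\ell'=\ell+1$. Initial states: $((q_{01},q_{02}),q_1',q_2',0)$; final states: those with $\ell=\kappa$. $\mathcal{A}$ is trimmed: states not reachable from an initial state, or from which no final state is reachable, are removed. $S$ is the set of non-trivial strongly connected components of $\mathcal{A}$ (those containing a path $A\xrightarrow{v}A$ with $v$ nonempty); all their states lie on level $\ell=0$. A linear order on the states of $\mathcal{A}$ is fixed; $A_s$ is the least state in $s$, and $v_s$ is a shortest nonempty word with a path $A_s\xrightarrow{v_s}A_s$. *)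

(* Defs.v *)
From mathcomp Require Import all_boot.
Set Implicit Arguments. Unset Strict Implicit. Unset Printing Implicit Defensive.

Section Words.
Variable Sigma : finType.
Variable bar : Sigma -> Sigma.

Definition wbar (w : seq Sigma) : seq Sigma := rev (map bar w).

Definition wpow (w : seq Sigma) (n : nat) : seq Sigma := flatten (nseq n w).

Definition pref_vplus (v u : seq Sigma) : Prop :=
  exists n, 0 < n /\ prefix u (wpow v n).

Definition dot (Q : Type) (t : Q -> Sigma -> Q) (p : Q) (w : seq Sigma) : Q :=
  foldl t p w.

Definition regular (L : seq Sigma -> Prop) : Prop :=
  exists (Q : finType) (t : Q -> Sigma -> Q) (q0 : Q) (F : pred Q),
    forall w, L w <-> F (dot t q0 w).

Definition Hk (kappa : nat) (L1 L2 : seq Sigma -> Prop) (w : seq Sigma) : Prop :=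
  exists gamma alpha beta,
    w = gamma ++ alpha ++ beta ++ wbar alpha ++ wbar gamma /\
    kappa <= size alpha /\
    (L1 (gamma ++ alpha ++ beta ++ wbar alpha) \/
     L2 (alpha ++ beta ++ wbar alpha ++ wbar gamma)).

Section Construction.
Variable kappa : nat.
Variables (Q1 Q2 : finType).
Variables (t1 : Q1 -> Sigma -> Q1) (t2 : Q2 -> Sigma -> Q2).
Variables (q01 : Q1) (q02 : Q2).
Variables (F1 : pred Q1) (F2 : pred Q2).

(* L1 = L(A1);  A2 accepts bar L2, i.e. w \in L2 iff bar w \in L(A2) *)
Definition L1 (w : seq Sigma) : Prop := F1 (dot t1 q01 w).
Definition L2 (w : seq Sigma) : Prop := F2 (dot t2 q02 (wbar w)).

Definition inQ12 (P : Q1 * Q2) : Prop :=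
  exists w, P = (dot t1 q01 w, dot t2 q02 w).

Definition inB (p1 : Q1) (p2 : Q2) (q1 : Q1) (q2 : Q2) (w : seq Sigma) : Prop :=
  dot t1 p1 w = q1 /\ dot t2 p2 (wbar w) = q2.

Definition basic_bridge (p1 : Q1) (p2 : Q2) (q1 : Q1) (q2 : Q2) : Prop :=
  exists w, inB p1 p2 q1 q2 w.

Definition St : Type := ((Q1 * Q2) * Q1 * Q2 * nat)%type.

Definition mkSt (p1 : Q1) (p2 : Q2) (q1 : Q1) (q2 : Q2) (l : nat) : St :=
  ((p1, p2), q1, q2, l).

Definition isSt (A : St) : Prop :=
  let: (P, q1, q2, l) := A in
  inQ12 P /\ basic_bridge P.1 P.2 q1 q2 /\ l <= kappa.

Definition arc (A : St) (a : Sigma) (B : St) : Prop :=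
  isSt A /\ isSt B /\
  exists (P : Q1 * Q2) (q1 : Q1) (q2 : Q2) (l l' : nat),
    A = (P, t1 q1 (bar a), t2 q2 (bar a), l) /\
    B = ((t1 P.1 a, t2 P.2 a), q1, q2, l') /\
    ((l = 0 /\ l' = 0 /\ ~~ F1 (t1 q1 (bar a)) /\ ~~ F2 (t2 q2 (bar a))) \/
     (l = 0 /\ l' = 1 /\ (F1 (t1 q1 (bar a)) || F2 (t2 q2 (bar a)))) \/
     (1 <= l < kappa /\ l' = l.+1)).

Fixpoint rpath (A : St) (w : seq Sigma) (B : St) : Prop :=
  match w with
  | [::] => A = B
  | a :: w' => exists C, arc A a C /\ rpath C w' B
  end.

Definition initial (A : St) : Prop :=
  isSt A /\ exists q1 q2, A = ((q01, q02), q1, q2, 0).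

Definition final (A : St) : Prop :=
  isSt A /\ A.2 = kappa.

Definition trimmed (A : St) : Prop :=
  isSt A /\
  (exists I w, initial I /\ rpath I w A) /\
  (exists w Fn, rpath A w Fn /\ final Fn).

Definition tarc (A : St) (a : Sigma) (B : St) : Prop :=
  trimmed A /\ trimmed B /\ arc A a B.

(* path of the trimmed automaton from A to B labelled w; ss lists the
   states reached after each letter (so size ss = size w, last ss = B) *)
Fixpoint tpathS (A : St) (w : seq Sigma) (ss : seq St) (B : St) : Prop :=
  match w, ss with
  | [::], [::] => A = B
  | a :: w', C :: ss' => tarc A a C /\ tpathS C w' ss' B
  | _, _ => False
  end.

Definition treach (A B : St) : Prop := exists w ss, tpathS A w ss B.

Definition nontrivial_scc (s : St -> Prop) : Prop :=
  (exists A, trimmed A /\ s A /\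
     forall B, s B <-> (trimmed B /\ treach A B /\ treach B A)) /\
  (exists A w ss, s A /\ w != [::] /\ tpathS A w ss A).

Definition shortest_loop (A : St) (v : seq Sigma) : Prop :=
  v != [::] /\ (exists ss, tpathS A v ss A) /\
  forall w ss, w != [::] -> tpathS A w ss A -> size v <= size w.

Definition hamiltonian_loop (s : St -> Prop) (A : St) (v : seq Sigma) : Prop :=
  exists ss, tpathS A v ss A /\ uniq ss /\ forall B, s B <-> B \in ss.

End Construction.
End Words.

(* Main.v *)
Require Import Defs.
From mathcomp Require Import all_boot zify.
Set Implicit Arguments. Unset Strict Implicit. Unset Printing Implicit Defensive.

Section Aux.
Variable Sigma : finType.
Variable bar : Sigma -> Sigma.
Hypothesis Hbar : involutive bar.

Lemma dot_cat (Q : Type) (t : Q -> Sigma -> Q) q (u w : seq Sigma) :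
  dot t q (u ++ w) = dot t (dot t q u) w.
Proof. by rewrite /dot foldl_cat. Qed.

Lemma wbar_cat (u w : seq Sigma) : wbar bar (u ++ w) = wbar bar w ++ wbar bar u.
Proof. by rewrite /wbar map_cat rev_cat. Qed.

Lemma wbarK (w : seq Sigma) : wbar bar (wbar bar w) = w.
Proof. rewrite /wbar map_rev revK -map_comp. rewrite (eq_map (g:=id)) ?map_id // => a /=; exact: Hbar. Qed.

Lemma size_wbar (w : seq Sigma) : size (wbar bar w) = size w.
Proof. by rewrite /wbar size_rev size_map. Qed.

Lemma wbar_cons a (w : seq Sigma) : wbar bar (a :: w) = wbar bar w ++ [:: bar a].
Proof. by rewrite /wbar /= rev_cons cats1. Qed.

Lemma wpowS (v : seq Sigma) n : wpow v n.+1 = v ++ wpow v n.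
Proof. by []. Qed.

Lemma wpow_add (v : seq Sigma) m n : wpow v (m + n) = wpow v m ++ wpow v n.
Proof. by elim: m => [|m IH] //=; rewrite addSn !wpowS IH catA. Qed.

Lemma wpowSr (v : seq Sigma) n : wpow v n.+1 = wpow v n ++ v.
Proof. by rewrite -addn1 wpow_add /wpow /= cats0. Qed.

Lemma size_wpow (v : seq Sigma) n : size (wpow v n) = n * size v.
Proof. by elim: n => [|n IH] //=; rewrite wpowS size_cat IH mulSn. Qed.

Lemma wbar_wpow (v : seq Sigma) n : wbar bar (wpow v n) = wpow (wbar bar v) n.
Proof. elim: n => [|n IH] //=. by rewrite wpowS wbar_cat IH -wpowSr. Qed.

Lemma cat_inj (T : Type) (s1 s2 t1 t2 : seq T) :
  s1 ++ t1 = s2 ++ t2 -> size s1 = size s2 -> s1 = s2 /\ t1 = t2.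
Proof.
move=> E Hs; have E1 := congr1 (take (size s1)) E; have E2 := congr1 (drop (size s1)) E.
rewrite take_size_cat // take_size_cat // in E1.
by rewrite drop_size_cat // drop_size_cat // in E2.
Qed.

Lemma cat_injr (T : Type) (s1 s2 t1 t2 : seq T) :
  s1 ++ t1 = s2 ++ t2 -> size t1 = size t2 -> s1 = s2 /\ t1 = t2.
Proof.
move=> E Ht; apply: cat_inj => //.
have := congr1 size E; rewrite !size_cat Ht; lia.
Qed.

Section NoF.
Variables (Q : Type) (t : Q -> Sigma -> Q) (F : pred Q).

Lemma noF_cat q (u w : seq Sigma) lo :
  (forall k, lo < k <= size u -> ~~ F (dot t q (take k u))) ->
  (forall k, 0 < k <= size w -> ~~ F (dot t (dot t q u) (take k w))) ->
  forall k, lo < k <= size (u ++ w) -> ~~ F (dot t q (take k (u ++ w))).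
Proof.
move=> Hu Hw k /andP[Hlo Hk]; rewrite take_cat.
case: ltnP => Hku; first by apply: Hu; rewrite Hlo ltnW.
case: (ltngtP k (size u)) Hku => // [Hgt|Heq] _.
  rewrite dot_cat; apply: Hw; rewrite size_cat in Hk; apply/andP; split; lia.
rewrite Heq subnn take0 cats0; have := Hu (size u); rewrite take_size; apply; apply/andP; split; lia.
Qed.

Lemma dot_wpow q (v : seq Sigma) n : dot t q v = q -> dot t q (wpow v n) = q.
Proof. by move=> Hv; elim: n => [|n IH] //; rewrite wpowS dot_cat Hv. Qed.

Lemma loop_noF q (v : seq Sigma) : dot t q v = q ->
  (forall k, 0 < k <= size v -> ~~ F (dot t q (take k v))) ->
  forall n k, 0 < k <= size (wpow v n) -> ~~ F (dot t q (take k (wpow v n))).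
Proof.
move=> Hv Hn; elim=> [|n IH] k Hk.
  by move: Hk; rewrite /wpow /=; lia.
rewrite wpowS; apply: (noF_cat (lo:=0)) => // j Hj; first by rewrite Hv; apply: IH.

Qed.
End NoF.

Lemma take_wpow_le (v : seq Sigma) m n k : k <= m * size v -> take k (wpow v (m + n)) = take k (wpow v m).
Proof.
move=> Hk; rewrite wpow_add take_cat size_wpow.
case: ltnP => // Hk'. have -> : k = m * size v by lia.
by rewrite subnn take0 cats0 -(size_wpow v m) take_size.
Qed.

End Aux.

Lemma take_pref (T : Type) (s u w : seq T) k : k <= size s -> take k (s ++ u) = take k (s ++ w).
Proof.
move=> Hk; rewrite !take_cat; case: ltnP => // Hk'.
have -> : k = size s by lia.
by rewrite subnn !take0.
Qed.

Lemma pigeon (Q : finType) (f : nat -> Q) : exists i j, i < j <= #|Q| /\ f i = f j.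
Proof.
case: (boolP [exists i : 'I_(#|Q|.+1), exists j : 'I_(#|Q|.+1), (i < j) && (f i == f j)]).
  move=> /existsP[i /existsP[j /andP[Hij /eqP E]]].
  by exists i, j; rewrite Hij -ltnS ltn_ord.
move=> Hn; exfalso.
have Hinj : injective (fun i : 'I_(#|Q|.+1) => f i).
  move=> i j E; apply/eqP; case: (ltngtP i j) => // H.
  - by case/negP: Hn; apply/existsP; exists i; apply/existsP; exists j; rewrite H E eqxx.
  - by case/negP: Hn; apply/existsP; exists j; apply/existsP; exists i; rewrite H E eqxx.
  - by apply/eqP/val_inj.
have := leq_card _ Hinj; rewrite card_ord; lia.
Qed.

Section R.
Variable Sigma : finType.
Variable bar : Sigma -> Sigma.
Variables (kappa : nat) (Q1 Q2 : finType) (t1 : Q1 -> Sigma -> Q1) (t2 : Q2 -> Sigma -> Q2)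
  (q01 : Q1) (q02 : Q2) (F1 : pred Q1) (F2 : pred Q2).

Lemma rpath_lvl0 (w : seq Sigma) : forall (A : St Q1 Q2) P' r1 r2,
  rpath bar kappa t1 t2 q01 q02 F1 F2 A w (P', r1, r2, 0) ->
  exists P : Q1 * Q2, A = (P, dot t1 r1 (wbar bar w), dot t2 r2 (wbar bar w), 0) /\
    (dot t1 P.1 w, dot t2 P.2 w) = P' /\
    forall k, 0 < k <= size w ->
      ~~ F1 (dot t1 r1 (take k (wbar bar w))) && ~~ F2 (dot t2 r2 (take k (wbar bar w))).
Proof.
elim: w => [|a w IH] A P' r1 r2 /=.
  move=> ->; exists P'; split => //; split; first by case: P'.
  by move=> k /andP[H0 H1]; exfalso; lia.
case=> C [Harc Hp]; have [PC [EC [EP Hk]]] := IH _ _ _ _ Hp.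
case: Harc => _ [_ [P [c1 [c2 [l [l' [EA [EC' Hc]]]]]]]].
rewrite EC in EC'; case: EC' => EPC Ec1 Ec2 El'.
have [El [HF1 HF2]] : l = 0 /\ ~~ F1 (t1 c1 (bar a)) /\ ~~ F2 (t2 c2 (bar a)).
  case: Hc => [[Hl [_ [? ?]]]|[[_ [Hl' _]]|[_ Hl']]]; first by [].
    congruence.
  congruence.
exists P; split.
  by rewrite EA El wbar_cons !dot_cat -Ec1 -Ec2.
split.
  by rewrite -EP EPC.
move=> k /andP[Hk0 Hk1]; rewrite wbar_cons take_cat size_wbar.
case: ltnP => Hkw.
  by apply: Hk; rewrite Hk0 ltnW.
case: (ltngtP k (size w).+1) Hk1 => // [Hlt|Heq] _.
  have Ek : k = size w by lia.
  rewrite Ek subnn take0 cats0; have := Hk (size w); rewrite take_oversize ?size_wbar //.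
  by apply; rewrite -Ek Hk0 leqnn.
rewrite Heq subSn // subnn take_cons take0 !dot_cat Ec1 Ec2 /=.
by rewrite HF1 HF2.
Qed.

Lemma tpathS_rpath (w : seq Sigma) : forall (A B : St Q1 Q2) ss,
  tpathS bar kappa t1 t2 q01 q02 F1 F2 A w ss B -> rpath bar kappa t1 t2 q01 q02 F1 F2 A w B.
Proof.
elim: w => [|a w IH] A B [|C ss] //=.
case=> [[_ [_ Harc]] Hp]; exists C; split => //; exact: IH Hp.
Qed.

End R.

Theorem lemma7
  (Sigma : finType) (bar : Sigma -> Sigma)
  (Hbar : involutive bar) (HSigma : 1 < #|Sigma|)
  (kappa : nat) (Hkappa : 0 < kappa)
  (Q1 Q2 : finType) (t1 : Q1 -> Sigma -> Q1) (t2 : Q2 -> Sigma -> Q2)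
  (q01 : Q1) (q02 : Q2) (F1 : pred Q1) (F2 : pred Q2)
  (ord : rel (St Q1 Q2))
  (Hord_total : total ord) (Hord_trans : transitive ord)
  (Hord_anti : antisymmetric ord)
  (s : St Q1 Q2 -> Prop)
  (Hs : nontrivial_scc bar kappa t1 t2 q01 q02 F1 F2 s)
  (p1 : Q1) (p2 : Q2) (q1 : Q1) (q2 : Q2)
  (HAs : s (mkSt p1 p2 q1 q2 0))
  (HAs_least : forall B, s B -> ord (mkSt p1 p2 q1 q2 0) B)
  (v : seq Sigma)
  (Hv : shortest_loop bar kappa t1 t2 q01 q02 F1 F2 (mkSt p1 p2 q1 q2 0) v)
  (Hham : hamiltonian_loop bar kappa t1 t2 q01 q02 F1 F2 s (mkSt p1 p2 q1 q2 0) v)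
  (x y z : seq Sigma) (d1 : Q1) (d2 : Q2)
  (H1 : kappa <= size x < size v + kappa /\ pref_vplus v x)
  (H2 : size y < size v /\ pref_vplus v (x ++ y) /\
        forall u, prefix u (x ++ y ++ z) -> size (x ++ y) < size u ->
          ~ pref_vplus v u)
  (H3 : inB bar t1 t2 (dot t1 p1 (x ++ y)) (dot t2 p2 x) d1 d2 z)
  (H4 : let u := wbar bar x ++ wpow (wbar bar v) #|Q1| in
        q1 = dot t1 d1 u /\
        F1 (dot t1 d1 (take kappa u)) /\
        forall k, kappa < k <= size u -> ~~ F1 (dot t1 d1 (take k u)))
  (H5 : let e2 := dot t2 d2 (wbar bar y ++ wbar bar x) in
        let u := wpow (wbar bar v) #|Q2| in
        q2 = dot t2 e2 u /\
        forall k, 0 < k <= size u -> ~~ F2 (dot t2 e2 (take k u))) :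
  regular (Hk bar kappa (L1 t1 q01 F1) (L2 bar t2 q02 F2)) ->
  exists mu delta beta,
    x ++ y ++ z ++ wbar bar x ++ wbar bar v =
      mu ++ delta ++ beta ++ wbar bar delta ++ wbar bar mu /\
    size delta = kappa /\
    F2 (dot t2 p2 (mu ++ delta ++ wbar bar beta ++ wbar bar delta)).
Proof.
move=> [QD [tD [qD [FD HD]]]].
have Hv0 : 0 < size v by case: H2 => ? _; lia.
case: Hham => ss [Hloop _].
have [P [EA [EP Hnl]]] := rpath_lvl0 (tpathS_rpath Hloop).
case: EA => EP0 Eq1 Eq2.
rewrite -EP0 /= in EP; case: EP => Hp1v Hp2v.
case: Hs => [[A0 [_ [_ Hiff]]] _].
have [[_ [[I [w0 [[_ [q1' [q2' EI]]] Hpw]]] _]] _] := proj1 (Hiff _) HAs.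
have [P0 [EI' [EP0' Hnw]]] := rpath_lvl0 Hpw.
rewrite EI in EI'; case: EI' => EP00 _ _.
rewrite -EP00 /= in EP0'; case: EP0' => Hw01 Hw02.
set vb := wbar bar v. set xb := wbar bar x. set w0b := wbar bar w0.
case: H1 => /andP[Hkx Hxv] [N1 [HN1 Hpx]].
case: H2 => Hyv [_ Hmax].
case: H3 => Hd1 Hd2.
case: H4 => Eu1 [HF1k HnF1].
case: H5 => Eu2 HnF2.
set e2 := dot t2 d2 (wbar bar y ++ xb) in Eu2 HnF2.
set u1 := xb ++ wpow vb #|Q1| in Eu1 HF1k HnF1.
have NF1 : forall m k, kappa < k <= size (xb ++ wpow vb (#|Q1| + m) ++ w0b) ->
    ~~ F1 (dot t1 d1 (take k (xb ++ wpow vb (#|Q1| + m) ++ w0b))).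
  move=> m; rewrite wpow_add -!catA catA -/u1.
  apply: noF_cat => // k Hk; rewrite -Eu1.
  apply: (noF_cat (lo:=0)) => [j Hj|j Hj|//]; last first.
    rewrite (dot_wpow _ (esym Eq1)).
    by move: Hj; rewrite /w0b size_wbar => Hj; have /andP[] := Hnw j Hj.
  apply: (loop_noF (esym Eq1)) => // j' Hj'.
  by move: Hj'; rewrite size_wbar => Hj'; have /andP[] := Hnl j' Hj'.
have NF2 : forall m k, 0 < k <= size (wpow vb (#|Q2| + m) ++ w0b) ->
    ~~ F2 (dot t2 e2 (take k (wpow vb (#|Q2| + m) ++ w0b))).
  move=> m; rewrite wpow_add -catA.
  apply: noF_cat => // k Hk; rewrite -Eu2.
  apply: (noF_cat (lo:=0)) => [j Hj|j Hj|//]; last first.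
    rewrite (dot_wpow _ (esym Eq2)).
    by move: Hj; rewrite /w0b size_wbar => Hj; have /andP[] := Hnw j Hj.
  apply: (loop_noF (esym Eq2)) => // j' Hj'.
  by move: Hj'; rewrite size_wbar => Hj'; have /andP[] := Hnl j' Hj'.
have [i [j [/andP[Hij _] Efij]]] :=
  pigeon (fun n => dot tD qD (w0 ++ wpow v (#|Q1| + #|Q2| + n))).
move: Efij => /= Efij.
set a := #|Q1| + #|Q2| + i in Efij.
set e := j - i.+1.
have Ea' : #|Q1| + #|Q2| + j = a.+1 + e by rewrite /a /e; lia.
rewrite Ea' in Efij.
set T := x ++ y ++ z ++ xb ++ vb.
set Z := w0 ++ wpow v a ++ T ++ wpow vb a ++ w0b.
have [r Hr] : exists r, wpow v N1 = x ++ r by apply/prefixP.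
have HZ : Hk bar kappa (L1 t1 q01 F1) (L2 bar t2 q02 F2) Z.
  apply/HD.
  have -> : Z = (w0 ++ wpow v a) ++ ((x ++ y ++ z ++ xb) ++ wpow vb a.+1 ++ w0b).
    by rewrite /Z /T wpowS -!catA.
  rewrite dot_cat Efij -dot_cat; apply/HD.
  set x1 := take (size x - kappa) x.
  set al := drop (size x - kappa) x.
  set bet := drop (size x) (wpow v e ++ x ++ y ++ z).
  have Htk : take (size x) (wpow v e ++ x ++ y ++ z) = x.
    rewrite catA (take_pref _ r); last by rewrite size_cat leq_addl.
    rewrite -catA -Hr -wpow_add addnC wpow_add Hr -catA.
    exact: take_size_cat.
  have Hxb2 : x ++ bet = wpow v e ++ x ++ y ++ z by rewrite -{1}Htk cat_take_drop.
  have Hx : x = x1 ++ al by rewrite cat_take_drop.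
  have Hxb : xb = wbar bar al ++ wbar bar x1 by rewrite /xb {1}Hx wbar_cat.
  exists (w0 ++ wpow v a.+1 ++ x1), al, bet; split; [|split].
  - rewrite wpow_add.
    have HW : wbar bar (wpow v a.+1) = wpow vb a.+1 by rewrite wbar_wpow.
    move: (wpow v a.+1) (wpow vb a.+1) HW => V1 V2 HW.
    apply: (@eq_trans _ _ (w0 ++ V1 ++ (x ++ bet) ++ xb ++ V2 ++ w0b)).
      by rewrite Hxb2 -!catA.
    by rewrite {1}Hx Hxb !wbar_cat HW -!catA.
  - by rewrite /al size_drop; lia.
  - left; rewrite /L1.
    have Hal : wbar bar al = take kappa u1.
      rewrite /u1 (take_pref _ [::]) ?cats0; last by rewrite size_wbar.
      by rewrite /xb /wbar take_rev size_map /al map_drop.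
    have -> : (w0 ++ wpow v a.+1 ++ x1) ++ al ++ bet ++ wbar bar al =
       w0 ++ wpow v a.+1 ++ (x ++ bet) ++ wbar bar al by rewrite Hx -!catA.
    rewrite Hxb2 Hal; move: (a.+1) => b.
    have -> : w0 ++ wpow v b ++ (wpow v e ++ x ++ y ++ z) ++ take kappa u1 =
      w0 ++ (wpow v b ++ wpow v e) ++ ((x ++ y) ++ z) ++ take kappa u1 by rewrite -!catA.
    rewrite dot_cat Hw01 dot_cat -wpow_add (dot_wpow _ Hp1v) dot_cat dot_cat Hd1.
    exact: HF1k.
case: HZ => ga [al [be [EZ [Hal HL]]]].
have Ha1 : #|Q1| <= a by rewrite /a; lia.
have Ha2 : #|Q2| <= a by rewrite /a; lia.
have sT : size T = (size x).*2 + size y + size z + size v.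
  by rewrite /T !size_cat /xb /vb !size_wbar; lia.
have sZ : size Z = (size w0).*2 + (a * size v).*2 + size T.
  by rewrite /Z !size_cat /w0b /vb !size_wbar !size_wpow size_wbar; lia.
have sZ2 : size Z = (size ga).*2 + (size al).*2 + size be.
  by rewrite EZ !size_cat !size_wbar; lia.
have EZb : wbar bar Z = (ga ++ al) ++ (wbar bar be ++ wbar bar al ++ wbar bar ga).
  by rewrite EZ !wbar_cat !(wbarK Hbar) -!catA.
have EZb2 : wbar bar Z = w0 ++ wpow v a ++ (v ++ x ++ wbar bar z ++ wbar bar y ++ xb) ++ wpow vb a ++ w0b.
  by rewrite /Z /T !wbar_cat /w0b /vb /xb !wbar_wpow !(wbarK Hbar) -!catA.
case: HL => HL.
-
  exfalso.
  set W := ga ++ al ++ be ++ wbar bar al in HL.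
  have EZW : Z = W ++ wbar bar ga by rewrite EZ /W -!catA.
  set Pre := w0 ++ wpow v a ++ x ++ y ++ z.
  set Rest := xb ++ wpow vb (#|Q1| + (a.+1 - #|Q1|)) ++ w0b.
  have EZPR : Z = Pre ++ Rest.
    rewrite /Z /Pre /Rest /T.
    have -> : #|Q1| + (a.+1 - #|Q1|) = a.+1 by lia.
    by rewrite wpowS -!catA.
  have HPre : dot t1 q01 Pre = d1.
    rewrite /Pre (catA x y) dot_cat Hw01 dot_cat (dot_wpow _ Hp1v).
    by rewrite dot_cat Hd1.
  have sPR : size Z = size Pre + size Rest by rewrite EZPR size_cat.
  have sW : size Z = size W + size ga by rewrite EZW size_cat size_wbar.
  have Hbound : size W <= size Pre + kappa.
    rewrite leqNgt; apply/negP => Hgt.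
    have EW : W = Pre ++ take (size W - size Pre) Rest.
      have EW0 : take (size W) Z = W by rewrite EZW take_size_cat.
      have Hle : size Pre <= size W by lia.
      by rewrite -{1}EW0 EZPR take_cat ltnNge Hle.
    move: HL; rewrite /L1 {1}EW dot_cat HPre => HF.
    have H := NF1 (a.+1 - #|Q1|) (size W - size Pre); rewrite -/Rest HF in H.
    suff Hc : kappa < size W - size Pre <= size Rest by move: (H Hc).
    apply/andP; split; lia.
  have sPre : size Pre = size w0 + a * size v + size x + size y + size z.
    by rewrite /Pre !size_cat size_wpow; lia.
  have sW2 : size W = size ga + (size al).*2 + size be.
    by rewrite /W !size_cat size_wbar; lia.
  have [Hz0|[z0 [z' Ez]]] : z = [::] \/ exists z0 z', z = z0 :: z'.
    by case: (z) => [|z0 z']; [left|right; exists z0, z'].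
    rewrite Hz0 /= in sPre.
    move: sT sZ sZ2 sPre sW sW2 Hbound sPR Hyv Hal; rewrite Hz0 /=; lia.
  set L := size (w0 ++ wpow v a ++ (x ++ y)) + 1.
  have sL : L <= size (ga ++ al).
    rewrite /L !size_cat size_wpow; move: sZ sT sZ2 sPre sW sW2 Hbound sPR Hyv Hal.
    rewrite Ez /=; lia.
  have E1 : take L Z = take L (wbar bar Z).
    have T1 : forall u, take L ((ga ++ al) ++ u) = take L (ga ++ al).
      by move=> u; rewrite (take_pref u [::]) ?cats0.
    have EZ' : Z = (ga ++ al) ++ (be ++ wbar bar al ++ wbar bar ga) by rewrite EZ catA.
    by rewrite {1}EZ' EZb !T1.
  have E2 : take L Z = (w0 ++ wpow v a) ++ ((x ++ y) ++ [:: z0]).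
    rewrite /Z /T Ez.
    have -> : w0 ++ wpow v a ++ (x ++ y ++ (z0 :: z') ++ xb ++ vb) ++ wpow vb a ++ w0b =
      (w0 ++ wpow v a ++ (x ++ y)) ++ z0 :: (z' ++ xb ++ vb ++ wpow vb a ++ w0b) by rewrite -!catA.
    rewrite /L take_cat ltnNge leq_addr /= addKn /= take0 -!catA //.
  set R' := wbar bar z ++ wbar bar y ++ xb ++ wpow vb a ++ w0b.
  have E3 : take L (wbar bar Z) = (w0 ++ wpow v a) ++ take (size (x ++ y) + 1) ((v ++ x) ++ R').
    have -> : wbar bar Z = (w0 ++ wpow v a) ++ ((v ++ x) ++ R') by rewrite EZb2 /R' -!catA.
    rewrite take_cat ltnNge.
    have -> : size (w0 ++ wpow v a) <= L by rewrite /L !size_cat; lia.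
    by have -> : L - size (w0 ++ wpow v a) = size (x ++ y) + 1 by rewrite /L !size_cat; lia.
  have Ex' : (w0 ++ wpow v a) ++ ((x ++ y) ++ [:: z0]) =
      (w0 ++ wpow v a) ++ take (size (x ++ y) + 1) ((v ++ x) ++ R') by rewrite -E2 E1 E3.
  have Ex := (cat_inj Ex' erefl).2.
  rewrite (take_pref _ r) in Ex; last by rewrite !size_cat; lia.
  have Evr : (v ++ x) ++ r = wpow v N1.+1 by rewrite -catA -Hr.
  rewrite Evr in Ex.
  apply: (Hmax ((x ++ y) ++ [:: z0])).
  - by apply/prefixP; exists z'; rewrite Ez -!catA.
  - by rewrite !size_cat /= addn1.
  - by exists N1.+1; split => //; rewrite Ex; apply: prefix_take.
- move: HL; rewrite /L2.
  have -> : wbar bar (al ++ be ++ wbar bar al ++ wbar bar ga) = ga ++ al ++ wbar bar be ++ wbar bar al.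
    by rewrite !wbar_cat !(wbarK Hbar) -!catA.
  move=> HL.
  set W := ga ++ al ++ wbar bar be ++ wbar bar al in HL.
  have EZW : wbar bar Z = W ++ wbar bar ga by rewrite EZb /W -!catA.
  set Pre := w0 ++ wpow v a ++ (v ++ x ++ wbar bar z ++ wbar bar y ++ xb).
  set Rest := wpow vb (#|Q2| + (a - #|Q2|)) ++ w0b.
  have EZPR : wbar bar Z = Pre ++ Rest.
    rewrite EZb2 /Pre /Rest.
    have -> : #|Q2| + (a - #|Q2|) = a by lia.
    by rewrite -!catA.
  have HPre : dot t2 q02 Pre = e2.
    by rewrite /Pre dot_cat Hw02 dot_cat (dot_wpow _ Hp2v) dot_cat Hp2v dot_cat dot_cat Hd2.
  have sPR : size Z = size Pre + size Rest.
    by have := congr1 size EZPR; rewrite size_wbar size_cat.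
  have sW : size Z = size W + size ga.
    by have := congr1 size EZW; rewrite !size_wbar size_cat size_wbar.
  have Hbound : size W <= size Pre.
    rewrite leqNgt; apply/negP => Hgt.
    have EW0 : take (size W) (wbar bar Z) = W by rewrite EZW take_size_cat.
    have EW : W = Pre ++ take (size W - size Pre) Rest.
      by rewrite -{1}EW0 EZPR take_cat ltnNge (ltnW Hgt).
    move: HL; rewrite {1}EW dot_cat HPre => HF.
    have H := NF2 (a - #|Q2|) (size W - size Pre); rewrite -/Rest HF in H.
    suff Hc : 0 < size W - size Pre <= size Rest by move: (H Hc).
    apply/andP; split; lia.
  set n0 := size (w0 ++ wpow v a).
  have sga : n0 <= size ga.
    rewrite /n0 size_cat size_wpow; move: sZ sT sW Hbound sPR.
    rewrite /Pre /Rest !size_cat !size_wpow !size_wbar; lia.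
  have Htg : take n0 ga = w0 ++ wpow v a.
    have E1 : take n0 Z = w0 ++ wpow v a by rewrite /Z catA take_size_cat.
    by rewrite -E1 EZ (take_pref _ [::]) ?cats0.
  set g' := drop n0 ga.
  have Ega : ga = (w0 ++ wpow v a) ++ g' by rewrite -Htg cat_take_drop.
  have ET : T = g' ++ al ++ be ++ wbar bar al ++ wbar bar g'.
    have E : (w0 ++ wpow v a) ++ (T ++ (wpow vb a ++ w0b)) =
      (w0 ++ wpow v a) ++ ((g' ++ al ++ be ++ wbar bar al ++ wbar bar g') ++ (wpow vb a ++ w0b)).
      transitivity Z; first by rewrite /Z -!catA.
      by rewrite EZ Ega !wbar_cat wbar_wpow -!catA.
    have [_ E'] := cat_inj E erefl.
    by have [E'' _] := cat_injr E' erefl.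
  exists g', (take kappa al), (drop kappa al ++ be ++ wbar bar (drop kappa al)).
  have Eal : al = take kappa al ++ drop kappa al by rewrite cat_take_drop.
  split; [|split].
  - by rewrite ET {1 2}Eal !wbar_cat -!catA.
  - by rewrite size_takel.
  - move: HL; rewrite /W Ega.
    have -> : ((w0 ++ wpow v a) ++ g') ++ al ++ wbar bar be ++ wbar bar al =
      w0 ++ (wpow v a ++ (g' ++ al ++ wbar bar be ++ wbar bar al)) by rewrite -!catA.
    rewrite dot_cat Hw02 dot_cat (dot_wpow _ Hp2v).
    have -> : g' ++ al ++ wbar bar be ++ wbar bar al =
      g' ++ take kappa al ++ wbar bar (drop kappa al ++ be ++ wbar bar (drop kappa al)) ++
        wbar bar (take kappa al).
      by rewrite {1 2}Eal !wbar_cat (wbarK Hbar) -!catA.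
    by [].
Qed.
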